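(* Let $N\ge 1$ and let $U_1,\dots,U_N$ be independent real random variables, each super-uniform, i.e. $\mathbb P(U_i\le x)\le x$ for all $x\in[0,1]$ (and $\mathbb P(U_i< 0)=0$). Then for every $\delta\in(0,1]$, $$\mathbb P\Big(\forall t>0,\ \frac1N\sum_{i=1}^N \mathbf 1\{U_i\le t\}<\frac{t}{\delta}\Big)\ \ge\ 1-\delta .$$
   Context: Note the strict inequality ''$<$'' inside the probability. *)

(* Defs.v *)
From HB Require Import structures.
From mathcomp Require Import all_boot all_order all_algebra.
From mathcomp Require Import all_classical all_reals all_analysis.
Set Implicit Arguments. Unset Strict Implicit. Unset Printing Implicit Defensive.
Import Order.TTheory GRing.Theory Num.Theory.
Local Open Scope classical_set_scope.
Local Open Scope ring_scope.

Definition mutually_independent_rv d (T : measurableType d) (R : realType)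
  (P : probability T R) (I : finType) (X : I -> T -> R) : Prop :=
  forall (J : {set I}) (B : I -> set R),
    (forall i, i \in J -> measurable (B i)) ->
    P (\bigcap_(i in [set i | i \in J]) (X i @^-1` B i)) =
    (\prod_(i in J) P (X i @^-1` B i))%E.

Definition super_uniform d (T : measurableType d) (R : realType)
  (P : probability T R) (U : T -> R) : Prop :=
  (forall x : R, 0 <= x <= 1 -> (P [set w | (U w <= x)%R] <= x%:E)%E) /\
  P [set w | U w < 0] = 0%E.

(* Main.v *)
Require Import Defs.
From HB Require Import structures.
From mathcomp Require Import all_boot all_order all_algebra.
From mathcomp Require Import all_classical all_reals all_analysis.
From mathcomp Require Import ring.
Import Order.TTheory GRing.Theory Num.Theory.
Local Open Scope classical_set_scope.
Local Open Scope ring_scope.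

Set Implicit Arguments. Unset Strict Implicit. Unset Printing Implicit Defensive.

Definition upd n (J : finType) (f : {ffun 'I_n -> J}) (i : 'I_n) (x : J) : {ffun 'I_n -> J} :=
  [ffun j => if j == i then x else f j].

Lemma upd_upd n (J : finType) (f : {ffun 'I_n -> J}) i x y : upd (upd f i x) i y = upd f i y.
Proof. by apply/ffunP => j; rewrite !ffunE; case: eqP. Qed.

Lemma upd_id n (J : finType) (f : {ffun 'I_n -> J}) i : upd f i (f i) = f.
Proof. by apply/ffunP => j; rewrite !ffunE; case: eqP => // ->. Qed.

Lemma upd_eq n (J : finType) (f g : {ffun 'I_n -> J}) i x :
  (upd (upd g i x) i (f i) == g) = (g i == f i).
Proof.
rewrite upd_upd; apply/eqP/eqP => [<-|e]; first by rewrite ffunE eqxx.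
by rewrite -e upd_id.
Qed.


Lemma indep_split (R : realFieldType) n m (q : 'I_n -> 'I_m.+1 -> R) i
  (A : {ffun 'I_n -> 'I_m.+1} -> R) (B : 'I_m.+1 -> R) :
  (forall f x, A (upd f i x) = A f) ->
  \sum_(f : {ffun 'I_n -> 'I_m.+1}) (\prod_j q j (f j)) * (A f * B (f i)) =
  (\sum_(g : {ffun 'I_n -> 'I_m.+1} | g i == ord0) (\prod_(j | j != i) q j (g j)) * A g) *
  (\sum_x q i x * B x).
Proof.
move=> Ai.
rewrite (partition_big (fun f : {ffun 'I_n -> 'I_m.+1} => f i) xpredT) //=.
rewrite mulr_sumr; apply: eq_bigr => x _.
rewrite (reindex_onto (fun g => upd g i x) (fun f => upd f i ord0)) /=; last first.
  by move=> f /eqP <-; rewrite upd_upd upd_id.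
rewrite mulr_suml; apply: eq_big => g.
  have -> : (ord0 : 'I_m.+1) = (upd g i ord0) i by rewrite ffunE eqxx.
  by rewrite ffunE eqxx eqxx /= upd_eq ffunE eqxx.
move=> _; rewrite (bigD1 i) //= !ffunE eqxx Ai.
rewrite (eq_bigr (fun j => q j (g j))); last by move=> j /negbTE ji; rewrite ffunE ji.
by ring.
Qed.


Definition cntf n (f : {ffun 'I_n -> 'I_n.+1}) (k : nat) : nat := \sum_(j < n) ((f j < k)%N : nat).
Definition Rf n (f : {ffun 'I_n -> 'I_n.+1}) : nat := \max_(k : 'I_n.+1 | (k <= cntf f k)%N) k.

Lemma Rf_le n (f : {ffun 'I_n -> 'I_n.+1}) : (Rf f <= n)%N.
Proof. by apply/bigmax_leqP => k _; rewrite -ltnS. Qed.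

Lemma Rf_max n (f : {ffun 'I_n -> 'I_n.+1}) (k : 'I_n.+1) : (k <= cntf f k)%N -> (k <= Rf f)%N.
Proof. by move=> h; apply: (leq_bigmax_cond k). Qed.

Lemma Rf_cnt n (f : {ffun 'I_n -> 'I_n.+1}) : (Rf f <= cntf f (Rf f))%N.
Proof.
have hA : (0 < #|[pred k : 'I_n.+1 | (k <= cntf f k)%N]|)%N.
  by apply/card_gt0P; exists ord0.
have [k hk e] := eq_bigmax_cond (fun k : 'I_n.+1 => nat_of_ord k) hA.
by rewrite /Rf e.
Qed.

Lemma cnt_upd n (f : {ffun 'I_n -> 'I_n.+1}) i k : (f i < k)%N -> cntf (upd f i ord0) k = cntf f k.
Proof.
move=> fik; apply: eq_bigr => j _; rewrite ffunE; case: eqP => // ->.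
by rewrite fik /= (leq_ltn_trans (leq0n _) fik).
Qed.

Lemma Rf_upd n (f : {ffun 'I_n -> 'I_n.+1}) i : (f i < Rf f)%N -> Rf (upd f i ord0) = Rf f.
Proof.
move=> fiR; apply/eqP; rewrite eqn_leq; apply/andP; split.
  apply/bigmax_leqP => k hk; case: (ltnP (f i) k) => fik.
    by apply: Rf_max; rewrite -(cnt_upd fik).
  exact: ltnW (leq_ltn_trans fik fiR).
have rn : (Rf f < n.+1)%N by rewrite ltnS Rf_le.
apply: (Rf_max (k := Ordinal rn)) => /=.
by rewrite cnt_upd //; exact: Rf_cnt.
Qed.

Lemma sum_indic (R : realFieldType) n (f : {ffun 'I_n -> 'I_n.+1}) (r : nat) :
  \sum_(j < n) (((f j < r)%N)%:R : R) = (cntf f r)%:R.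
Proof. by rewrite /cntf natr_sum. Qed.

Lemma simes_fin (R : realFieldType) n (dl : R) (q : 'I_n -> 'I_n.+1 -> R) :
  (0 < n)%N -> 0 <= dl ->
  (forall i m, 0 <= q i m) -> (forall i, \sum_m q i m = 1) ->
  (forall i (k : 'I_n.+1), (0 < k)%N ->
      \sum_(m : 'I_n.+1 | (m < k)%N) q i m <= k%:R * dl / n%:R) ->
  \sum_(f : {ffun 'I_n -> 'I_n.+1} | (0 < Rf f)%N) \prod_i q i (f i) <= dl.
Proof.
move=> n0 dl0 q0 q1 qk.
pose W i (f : {ffun 'I_n -> 'I_n.+1}) : R :=
  ((f i < Rf (upd f i ord0))%N)%:R / (Rf (upd f i ord0))%:R.
have W0 i f : 0 <= W i f by rewrite /W divr_ge0.
have Pq0 (f : {ffun 'I_n -> 'I_n.+1}) : 0 <= \prod_i q i (f i) by apply: prodr_ge0.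
have step1 f : (0 < Rf f)%N -> 1 <= \sum_i W i f.
  move=> R0; apply: (@le_trans _ _ (\sum_i ((f i < Rf f)%N)%:R / (Rf f)%:R)).
    rewrite -mulr_suml sum_indic ler_pdivlMr ?ltr0n // mul1r ler_nat.
    exact: Rf_cnt.
  apply: ler_sum => i _; case: (ltnP (f i) (Rf f)) => h.
    by rewrite /W Rf_upd // h.
  by rewrite mul0r.
have step2 : \sum_(f : {ffun 'I_n -> 'I_n.+1} | (0 < Rf f)%N) \prod_i q i (f i)
    <= \sum_i \sum_(f : {ffun 'I_n -> 'I_n.+1}) \prod_j q j (f j) * W i f.
  rewrite exchange_big /= [X in _ <= X](bigID (fun f => (0 < Rf f)%N)) /=.
  rewrite -[X in X <= _]addr0; apply: lerD; last first.
    by apply: sumr_ge0 => f _; apply: sumr_ge0 => i _; apply: mulr_ge0.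
  apply: ler_sum => f hf; rewrite -mulr_sumr -[X in X <= _]mulr1.
  by apply: ler_wpM2l => //; apply: step1.
have tot : \sum_(f : {ffun 'I_n -> 'I_n.+1}) \prod_j q j (f j) = 1.
  by rewrite -bigA_distr_bigA big1 // => i _; apply: q1.
have step3 i : \sum_(f : {ffun 'I_n -> 'I_n.+1}) \prod_j q j (f j) * W i f <= dl / n%:R.
  pose A (k : 'I_n.+1) (f : {ffun 'I_n -> 'I_n.+1}) : R :=
    (Rf (upd f i ord0) == k)%:R.
  pose B (k : 'I_n.+1) (x : 'I_n.+1) : R := ((x < k)%N)%:R / k%:R.
  have AI k f x : A k (upd f i x) = A k f by rewrite /A upd_upd.
  have WE f : W i f = \sum_k A k f * B k (f i).
    have rn : (Rf (upd f i ord0) < n.+1)%N by rewrite ltnS Rf_le.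
    rewrite (bigD1 (Ordinal rn)) //= big1 ?addr0; last first.
      move=> k hk; rewrite /A; case: eqP => [e|]; last by rewrite mul0r.
      by case/eqP: hk; apply: val_inj; rewrite /= e.
    by rewrite /A /B /= eqxx mul1r.
  have A1 f : \sum_k A k f = 1.
    have rn : (Rf (upd f i ord0) < n.+1)%N by rewrite ltnS Rf_le.
    rewrite (bigD1 (Ordinal rn)) //= big1 ?addr0; last first.
      move=> k hk; rewrite /A; case: eqP => [e|] //.
      by case/eqP: hk; apply: val_inj; rewrite /= e.
    by rewrite /A /= eqxx.
  pose C k := \sum_(g : {ffun 'I_n -> 'I_n.+1} | g i == ord0)
                 (\prod_(j | j != i) q j (g j)) * A k g.
  have E1 k : \sum_(f : {ffun 'I_n -> 'I_n.+1}) \prod_j q j (f j) * (A k f * B k (f i))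
      = C k * \sum_x q i x * B k x by apply: indep_split.
  have E2 k : \sum_(f : {ffun 'I_n -> 'I_n.+1}) \prod_j q j (f j) * (A k f * 1) = C k.
    rewrite (@indep_split _ _ _ q i (fun f => A k f) (fun _ => 1)) //.
    by rewrite (eq_bigr (fun x => q i x)) ?q1 ?mulr1 // => x _; rewrite mulr1.
  have C0 k : 0 <= C k.
    rewrite -E2; apply: sumr_ge0 => f _; rewrite mulr1; apply: mulr_ge0 => //.
  have Csum : \sum_k C k = 1.
    rewrite -(eq_bigr _ (fun k _ => E2 k)) exchange_big /= -[X in _ = X]tot.
    apply: eq_bigr => f _; rewrite -mulr_sumr.
    rewrite (eq_bigr (fun k => A k f)) ?A1 ?mulr1 // => k _; exact: mulr1.
  have Dk k : \sum_x q i x * B k x <= dl / n%:R.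
    case: (posnP k) => k0.
      rewrite big1 ?divr_ge0 // => x _.
      by rewrite /B k0 ltn0 mul0r mulr0.
    rewrite (bigID (fun x : 'I_n.+1 => (x < k)%N)) /= [X in _ + X]big1 ?addr0; last first.
      by move=> x /negbTE h; rewrite /B h mul0r mulr0.
    rewrite (eq_bigr (fun x => q i x / k%:R)); last by move=> x h; rewrite /B h mul1r.
    rewrite -mulr_suml ler_pdivrMr ?ltr0n // [X in _ <= X]mulrC mulrA.
    exact: qk.
  rewrite (eq_bigr (fun f : {ffun 'I_n -> 'I_n.+1} => \sum_k \prod_j q j (f j) * (A k f * B k (f i)))); last first.
    by move=> f _; rewrite WE mulr_sumr.
  rewrite exchange_big /= (eq_bigr _ (fun k _ => E1 k)).
  apply: (@le_trans _ _ (\sum_k C k * (dl / n%:R))).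
    by apply: ler_sum => k _; apply: ler_wpM2l.
  by rewrite -mulr_suml Csum mul1r.
apply: (le_trans step2); apply: (@le_trans _ _ (\sum_(i < n) (dl / n%:R))).
  exact: ler_sum.
by rewrite sumr_const card_ord -mulrnAr -[_^-1 *+ n]mulr_natl mulfV ?mulr1 // pnatr_eq0 -lt0n.
Qed.


Lemma fin_add d (T : measurableType d) (R : realType)
  (mu : {measure set T -> \bar R}) (J : finType) (h : T -> J) (S : pred J) :
  (forall j, measurable (h @^-1` [set j])) ->
  measurable [set w | S (h w)] /\
  mu [set w | S (h w)] = (\sum_(j | S j) mu (h @^-1` [set j]))%E.
Proof.
move=> hm.
suff H : forall s : seq J, uniq s ->
  measurable [set w | (h w \in s) && S (h w)] /\
  mu [set w | (h w \in s) && S (h w)] = (\sum_(j <- s | S j) mu (h @^-1` [set j]))%E.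
  have [m e] := H _ (index_enum_uniq J).
  have E : [set w | (h w \in index_enum J) && S (h w)] = [set w | S (h w)].
    by apply/funext => w /=; rewrite mem_index_enum.
  by rewrite -E; split.
elim => [|x s IH] /=.
  move=> _; rewrite big_nil.
  have -> : [set w | (h w \in [::]) && S (h w)] = set0.
    by apply/seteqP; split => w //=; rewrite in_nil.
  by split => //; rewrite measure0.
move=> /andP[xs us]; have [m e] := IH us.
rewrite big_cons; case Sx: (S x).
  have E : [set w | (h w \in x :: s) && S (h w)] =
           h @^-1` [set x] `|` [set w | (h w \in s) && S (h w)].
    apply/seteqP; split => w /=.
      rewrite in_cons => /andP[/orP[/eqP ->|hs] Sw]; first by left.
      by right; rewrite hs.
    by case=> [->|/andP[hs ->]]; rewrite ?in_cons ?eqxx ?hs ?orbT ?Sx.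
  rewrite E; split; first exact: measurableU.
  rewrite measureU // -?e //.
  apply/seteqP; split => w //= [hx /andP[hs _]].
  by move: xs; rewrite -hx hs.
have E : [set w | (h w \in x :: s) && S (h w)] = [set w | (h w \in s) && S (h w)].
  apply/funext => w /=; rewrite in_cons.
  by case: eqP => //= ->; rewrite Sx andbF.
by rewrite E.
Qed.

Definition bucket (R : realType) (N : nat) (delta : R) (u : R) : 'I_N.+1 :=
  inord (find (fun k : nat => u <= k.+1%:R * delta / N%:R) (iota 0 N)).

Lemma bucket_lt (R : realType) N (delta : R) u (k : nat) :
  0 <= delta -> (0 < k <= N)%N ->
  (bucket N delta u < k)%N = (u <= k%:R * delta / N%:R).
Proof.
move=> d0 /andP[k0 kN].
have mono a b : (a <= b)%N -> a%:R * delta / N%:R <= b%:R * delta / N%:R.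
  move=> ab; apply: ler_wpM2r; first by rewrite invr_ge0 ler0n.
  by apply: ler_wpM2r => //; rewrite ler_nat.
rewrite /bucket inordK; last first.
  by rewrite ltnS; apply: (leq_trans (find_size _ _)); rewrite size_iota.
set p := fun k : nat => _.
apply/idP/idP.
  move=> hf.
  have hh : has p (iota 0 N).
    by rewrite has_find size_iota; exact: leq_trans hf kN.
  have := nth_find 0 hh.
  rewrite nth_iota ?add0n; last exact: leq_trans hf kN.
  by rewrite /p => /le_trans; apply; apply: mono.
move=> hu; rewrite ltnNge; apply/negP => hk.
have hlt : (k.-1 < find p (iota 0 N))%N by rewrite prednK.
have := before_find 0 hlt.
rewrite nth_iota ?add0n; last by rewrite prednK.
by rewrite /p prednK // hu.
Qed.

Lemma bucket_lt_meas (R : realType) N (delta : R) (k : nat) :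
  0 <= delta -> measurable [set u : R | (bucket N delta u < k)%N].
Proof.
move=> d0; case: (posnP k) => [->|k0].
  have -> : [set u : R | (bucket N delta u < 0)%N] = set0.
    by apply/seteqP; split => u //=; rewrite ltn0.
  exact: measurable0.
case: (leqP k N) => kN.
  have -> : [set u : R | (bucket N delta u < k)%N] =
            [set` (`]-oo, k%:R * delta / N%:R] : interval R)].
    by apply/seteqP; split => u /=; rewrite in_itv /= bucket_lt ?k0.
  exact: measurable_itv.
have -> : [set u : R | (bucket N delta u < k)%N] = setT.
  by apply/seteqP; split => u //= _; apply: leq_trans (ltn_ord _) kN.
exact: measurableT.
Qed.

Lemma bucket_fib_meas (R : realType) N (delta : R) (m : 'I_N.+1) :
  0 <= delta -> measurable [set u : R | bucket N delta u = m].
Proof.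
move=> d0.
have -> : [set u : R | bucket N delta u = m] =
  [set u : R | (bucket N delta u < m.+1)%N] `\` [set u : R | (bucket N delta u < m)%N].
  apply/seteqP; split => u /=.
    by move=> ->; split; [exact: ltnSn | rewrite ltnn].
  move=> [h1 h2]; apply/val_inj/eqP; rewrite eqn_leq -ltnS h1 /= leqNgt.
  by apply/negP.
by apply: measurableD; apply: bucket_lt_meas.
Qed.

Lemma fin_addP d (T : measurableType d) (R : realType)
  (mu : probability T R) (J : finType) (h : T -> J) (S : pred J) :
  (forall j, measurable (h @^-1` [set j])) ->
  measurable [set w | S (h w)] /\
  mu [set w | S (h w)] = (\sum_(j | S j) mu (h @^-1` [set j]))%E.
Proof. exact: fin_add. Qed.

Unset Implicit Arguments.

Theorem mainTheorem1 (d : measure_display) (T : measurableType d)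
  (R : realType) (P : probability T R) (N : nat) (U : 'I_N -> T -> R) :
  (1 <= N)%N ->
  (forall i, measurable_fun setT (U i)) ->
  mutually_independent_rv P U ->
  (forall i, super_uniform P (U i)) ->
  forall delta : R, 0 < delta <= 1 ->
  ((1 - delta)%:E <= P [set w | forall t : R, (0 < t)%R ->
        ((\sum_(i < N) ((U i w <= t)%R%:R : R)) / N%:R < t / delta)%R])%E.
Proof.
move=> N1 hU hI hS delta /andP[d0 d1].
have d0' : 0 <= delta by apply: ltW.
have Pm i (Y : set R) : measurable Y -> measurable (U i @^-1` Y).
  by move=> mY; rewrite -[_ @^-1` _]setTI; apply: hU.
pose bk := bucket N delta.
have Bm (m : 'I_N.+1) : measurable [set u : R | bk u = m] by apply: bucket_fib_meas.
pose cell w : {ffun 'I_N -> 'I_N.+1} := [ffun i => bk (U i w)].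
have cellE (f : {ffun 'I_N -> 'I_N.+1}) : cell @^-1` [set f] =
    \bigcap_(i in [set i | i \in [set: 'I_N]%SET]) (U i @^-1` [set u | bk u = f i]).
  apply/seteqP; split => w /=.
    by move=> <- i _; rewrite /cell ffunE.
  by move=> h; apply/ffunP => i; rewrite ffunE; apply: h; rewrite /= inE.
have cellm (f : {ffun 'I_N -> 'I_N.+1}) : measurable (cell @^-1` [set f]).
  rewrite cellE; apply: fin_bigcap_measurable; first exact: finite_finset.
  by move=> i _; apply: Pm.
pose q i m := fine (P (U i @^-1` [set u | bk u = m])).
have qE i m : P (U i @^-1` [set u | bk u = m]) = (q i m)%:E.
  by rewrite fineK // fin_num_measure //; apply: Pm.
have q0 i m : 0 <= q i m by apply: fine_ge0.
have hfib i : forall m : 'I_N.+1,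
    measurable ((fun w => bk (U i w)) @^-1` [set m]) by move=> m; exact: (Pm i _ (Bm m)).
have q1 i : \sum_m q i m = 1.
  have [_ e] := @fin_addP _ _ _ P _ (fun w => bk (U i w)) xpredT (hfib i).
  have E : [set w | xpredT (bk (U i w))] = setT.
    by apply/seteqP; split.
  have P1 : P [set w | xpredT (bk (U i w))] = 1%E.
    by rewrite E; exact: probability_setT.
  move: e; rewrite P1 => /esym.
  rewrite (eq_bigr (fun m => (q i m)%:E)) ?sumEFin; last by move=> m _; rewrite -qE.
  by move=> [].
have qk i (k : 'I_N.+1) : (0 < k)%N ->
    \sum_(m : 'I_N.+1 | (m < k)%N) q i m <= k%:R * delta / N%:R.
  move=> k0.
  have [_ e] := @fin_addP _ _ _ P _ (fun w => bk (U i w)) (fun m : 'I_N.+1 => (m < k)%N) (hfib i).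
  rewrite (eq_bigr (fun m => (q i m)%:E)) ?sumEFin in e; last by move=> m _; rewrite -qE.
  rewrite -lee_fin -e.
  have kN : (k <= N)%N by rewrite -ltnS.
  have -> : [set w | (bk (U i w) < k)%N] = [set w | U i w <= k%:R * delta / N%:R].
    by apply/funext => w /=; rewrite /bk bucket_lt ?k0.
  apply: (hS i).1; apply/andP; split.
    by apply: divr_ge0 => //; apply: mulr_ge0.
  rewrite ler_pdivrMr ?ltr0n // mul1r mulrC.
  apply: (@le_trans _ _ (1 * N%:R)); last by rewrite mul1r.
  by apply: ler_pM => //; rewrite ler_nat.
have [badm badP] := @fin_addP _ _ _ P _ cell (fun f => (0 < Rf f)%N) cellm.
have key : (P [set w | (0 < Rf (cell w))%N] <= delta%:E)%E.
  rewrite badP.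
  rewrite (eq_bigr (fun f : {ffun 'I_N -> 'I_N.+1} => (\prod_i q i (f i))%:E)); last first.
    move=> f _; rewrite cellE.
    have e := hI [set: 'I_N]%SET (fun i => [set u | bk u = f i]) (fun i _ => Bm (f i)).
    transitivity (\prod_(i in [set: 'I_N]%SET) P (U i @^-1` [set u | bk u = f i]))%E.
      exact: e.
    rewrite -prodEFin; apply: eq_big => [i|i _]; first by rewrite inE.
    exact: qE.
  rewrite sumEFin lee_fin; apply: simes_fin => //.
have cntE w (k : nat) : (0 < k)%N -> (k <= N)%N ->
    cntf (cell w) k = \sum_(i < N) ((U i w <= k%:R * delta / N%:R)%R : nat).
  move=> k0 kN; apply: eq_bigr => i _.
  by rewrite /cell ffunE /bk bucket_lt // k0 kN.
have Gm : [set w | forall t : R, (0 < t)%R ->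
        ((\sum_(i < N) ((U i w <= t)%R%:R : R)) / N%:R < t / delta)%R] =
    ~` [set w | (0 < Rf (cell w))%N].
  apply/seteqP; split => w /=.
    move=> hG hbad.
    have kc := Rf_cnt (cell w).
    have kN := Rf_le (cell w).
    set k := Rf (cell w) in hbad kc kN.
    have cpos : 0 < k%:R * delta / N%:R.
      by apply: divr_gt0; [apply: mulr_gt0 => //; rewrite ltr0n | rewrite ltr0n].
    have := hG _ cpos.
    rewrite -natr_sum -cntE //.
    have -> : k%:R * delta / N%:R / delta = k%:R / N%:R.
      by field; rewrite pnatr_eq0 -lt0n N1 gt_eqF.
    rewrite ltr_pM2r ?invr_gt0 ?ltr0n // ltr_nat.
    by rewrite ltnNge kc.
  move=> hnb t t0; rewrite ltNge; apply/negP => hge; apply: hnb.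
  rewrite -natr_sum in hge.
  set n := \sum_(i < N) ((U i w <= t)%R : nat) in hge.
  have npos : (0 < n)%N.
    rewrite lt0n; apply/negP => /eqP n0; move: hge; rewrite n0 mul0r.
    by rewrite leNgt divr_gt0.
  have nN : (n <= N)%N.
    apply: (@leq_trans (\sum_(i < N) 1)%N).
      by apply: leq_sum => i _; exact: leq_b1.
    by rewrite sum_nat_const card_ord muln1.
  have tc : t <= n%:R * delta / N%:R.
    by rewrite ler_pdivrMr // mulrAC in hge.
  have rn : (n < N.+1)%N by rewrite ltnS.
  apply: (leq_trans npos); apply: (Rf_max (k := Ordinal rn)) => /=.
  rewrite cntE //; apply: leq_sum => i _.
  by case h: (U i w <= t) => //=; rewrite (le_trans h tc).
have bm' : measurable [set w | (0 < Rf (cell w))%N] by exact: badm.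
have PC : P (~` [set w | (0 < Rf (cell w))%N]) = (1 - P [set w | (0 < Rf (cell w))%N])%E.
  exact: probability_setC.
rewrite Gm PC.
have xf : P [set w | (0 < Rf (cell w))%N] \is a fin_num by rewrite fin_num_measure.
move: key; rewrite -(fineK xf) lee_fin -EFinB lee_fin => key.
by apply: lerB.
Qed.
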